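(* Let $A\subseteq Q_n$ be an extremal set for which there exist $t\in Q_n$ and an integer $r$ such that $B(t,r)\subseteq A\subseteq B(t,r+1)$. Then $A$ is isomorphic to an initial segment of the simplicial order.
   Context: $Q_n$ is the hypercube with vertex set the power set of $[n]=\{1,\dots,n\}$ and metric $d(x,y)=|x\Delta y|$; $B(x,\rho)=\{y: d(x,y)\le\rho\}$. For $A\subseteq Q_n$ and $t>0$, $N^t(A)=\{x:\min_{y\in A}d(x,y)\le t\}$; $N^t(A)$ is minimal if $|N^t(A)|\le|N^t(B)|$ for all $B$ with $|B|=|A|$. $A$ is extremal if $N^t(A)$ and $N^t(Q_n\setminus A)$ are minimal for all integers $t>0$. The lexicographic order on $r$-subsets: $A<_{lex}B$ iff $\min(A\Delta B)\in A$. The simplicial order on $Q_n$: $A<_{sim}B$ iff $|A|<|B|$, or $|A|=|B|$ and $A<_{lex}B$. Two subsets of $Q_n$ are isomorphic if one is the image of the other under an automorphism of $Q_n$ (a map $x\mapsto\sigma(x)\Delta I$ with $\sigma$ a permutation of $[n]$ and $I\subseteq[n]$). *)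

(* Defs.v *)
(* The hypercube Q_n has vertex set {set 'I_n}
   (ground set [n] = {1..n} represented by 'I_n = {0..n-1}). *)
From mathcomp Require Import all_boot all_order all_algebra all_fingroup.
Set Implicit Arguments. Unset Strict Implicit. Unset Printing Implicit Defensive.

Section Hypercube.
Variable n : nat.
Notation vtx := {set 'I_n}.

Definition symdiff (x y : vtx) : vtx := (x :\: y) :|: (y :\: x).

Definition dist (x y : vtx) : nat := #|symdiff x y|.

Definition ball (x : vtx) (rho : int) : {set vtx} :=
  [set y | ((dist x y)%:Z <= rho)%R].

Definition nbhd (t : nat) (A : {set vtx}) : {set vtx} :=
  [set x | [exists y in A, dist x y <= t]].

Definition nbhd_minimal (t : nat) (A : {set vtx}) : Prop :=
  forall B : {set vtx}, #|B| = #|A| -> #|nbhd t A| <= #|nbhd t B|.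

Definition extremal (A : {set vtx}) : Prop :=
  forall t : nat, 0 < t -> nbhd_minimal t A /\ nbhd_minimal t (~: A).

Definition lex_lt (x y : vtx) : bool :=
  [exists i : 'I_n, (i \in symdiff x y) && (i \in x) &&
     [forall j : 'I_n, (j < i)%N ==> (j \notin symdiff x y)]].

Definition sim_lt (x y : vtx) : bool :=
  (#|x| < #|y|) || ((#|x| == #|y|) && lex_lt x y).

Definition sim_initial_segment (S : {set vtx}) : Prop :=
  forall x y : vtx, x \in S -> sim_lt y x -> y \in S.

Definition cube_aut (sigma : {perm 'I_n}) (I : vtx) (x : vtx) : vtx :=
  symdiff (sigma @: x) I.

Definition cube_isomorphic (A B : {set vtx}) : Prop :=
  exists (sigma : {perm 'I_n}) (I : vtx), B = [set cube_aut sigma I x | x in A].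

End Hypercube.

(* Main.v *)
Require Import Defs.
From mathcomp Require Import all_boot all_order all_algebra all_fingroup.
From mathcomp Require Import zify.
Set Implicit Arguments. Unset Strict Implicit. Unset Printing Implicit Defensive.

Lemma ext_set (T : finType) (x S : {set T}) j :
  x \subset S -> #|x| <= j -> j <= #|S| ->
  exists y : {set T}, [/\ x \subset y, y \subset S & #|y| = j].
Proof.
move=> xS hx hS; have [m hm] : exists m, j = #|x| + m by exists (j - #|x|); lia.
elim: m x xS hx hS hm => [|m IH] x xS hx hS hm.
  by exists x; split => //; lia.
have : ~~ (S \subset x).
  apply/negP => Sx; have := subset_leq_card Sx; lia.
case/subsetPn => a aS ax.
have c1 : #|a |: x| = #|x| + 1 by rewrite cardsU1 ax add1n; lia.
have s1 : a |: x \subset S by rewrite subUset sub1set aS xS.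
have [y [h1 h2 h3]] := IH (a |: x) s1 ltac:(lia) hS ltac:(lia).
exists y; split => //; apply: subset_trans h1; exact: subsetUr.
Qed.

Lemma aux1 a k : 0 < k -> a + (k - 1) = k -> a = 1.
Proof. lia. Qed.

Section Main.
Variable N : nat.
Notation T := {set 'I_N}.

Lemma pimE (s : {perm 'I_N}) (x : T) i : (i \in s @: x) = (s^-1%g i \in x).
Proof. by rewrite -{1}(permKV s i) mem_imset //; exact: perm_inj. Qed.

Lemma pim_card (s : {perm 'I_N}) (x : T) : #|s @: x| = #|x|.
Proof. by apply: card_imset; exact: perm_inj. Qed.

Lemma pimK (s : {perm 'I_N}) (x : T) : s^-1%g @: (s @: x) = x.
Proof. by apply/setP => i; rewrite !pimE invgK permK. Qed.
Lemma pimKV (s : {perm 'I_N}) (x : T) : s @: (s^-1%g @: x) = x.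
Proof. by apply/setP => i; rewrite !pimE invgK permKV. Qed.

Lemma pim_sub (s : {perm 'I_N}) (x y : T) : (s @: x \subset s @: y) = (x \subset y).
Proof.
apply/idP/idP => [h|h]; last exact: imsetS.
by rewrite -(pimK s x) -(pimK s y); exact: imsetS.
Qed.

Definition sfx (d : nat) : T := [set i : 'I_N | d <= i].
Definition lev (d k : nat) : {set T} := [set x : T | (x \subset sfx d) && (#|x| == k)].
Definition up (d t k : nat) (F : {set T}) : {set T} :=
  [set x : T | [&& x \subset sfx d, #|x| == k + t & [exists f in F, f \subset x]]].
Definition down (t k : nat) (G : {set T}) : {set T} :=
  [set x : T | (#|x| + t == k) && [exists g in G, x \subset g]].
Definition Good (d k : nat) (F : {set T}) : Prop :=
  forall t, 0 < t -> forall F2 : {set T}, F2 \subset lev d k -> #|F2| = #|F| ->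
    #|up d t k F| <= #|up d t k F2| /\
    #|down t k (lev d k :\: F)| <= #|down t k (lev d k :\: F2)|.
Definition imF (s : {perm 'I_N}) (F : {set T}) : {set T} := [set s @: x | x : T in F].
Definition lexdc (d k : nat) (S : {set T}) : Prop :=
  forall x y : T, x \in S -> y \in lev d k -> lex_lt y x -> y \in S.
Definition fixlt (s : {perm 'I_N}) d := forall i : 'I_N, i < d -> s i = i.

Lemma imFE s F y : (y \in imF s F) = (s^-1%g @: y \in F).
Proof.
apply/imsetP/idP => [[x xF ->]|h]; first by rewrite pimK.
by exists (s^-1%g @: y) => //; rewrite pimKV.
Qed.

Lemma imF_card s F : #|imF s F| = #|F|.
Proof. apply: card_imset => x y; exact: (imset_inj (@perm_inj _ s)). Qed.

Lemma imF_comp s1 s2 F : imF (s1 * s2)%g F = imF s2 (imF s1 F).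
Proof.
apply/setP => y; rewrite !imFE; congr (_ \in F).
by apply/setP => i; rewrite !pimE !invgK permM.
Qed.

Lemma fixlt_sfx s d i : fixlt s d -> (d <= s i) = (d <= i).
Proof.
move=> h; apply/idP/idP => hi.
  apply/negP => /negP; rewrite -ltnNge => lt.
  move: hi; rewrite h //; lia.
apply/negP => /negP; rewrite -ltnNge => lt.
have e := h _ lt; have := perm_inj e => ei; move: lt; rewrite ei; lia.
Qed.

Definition presv (s : {perm 'I_N}) d := forall i : 'I_N, (d <= s i) = (d <= i).

Lemma presvV s d : presv s d -> presv (s^-1)%g d.
Proof. by move=> h i; rewrite -(h ((s^-1)%g i)) permKV. Qed.

Lemma fixlt_presv s d : fixlt s d -> presv s d.
Proof. by move=> h i; apply: fixlt_sfx. Qed.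

Lemma sfx_pimS s d : presv s d -> s @: sfx d = sfx d.
Proof.
move=> h; apply/setP => i; rewrite pimE !inE.
exact: presvV h i.
Qed.

Lemma sfx_pim s d (x : T) : presv s d -> (s @: x \subset sfx d) = (x \subset sfx d).
Proof. by move=> h; rewrite -{1}(sfx_pimS h) pim_sub. Qed.

Lemma lev_imF s d k : presv s d -> imF s (lev d k) = lev d k.
Proof.
move=> h; apply/setP => y; rewrite imFE !inE pim_card sfx_pim //.
exact: presvV.
Qed.

Lemma setD_imF s (A B : {set T}) : imF s (A :\: B) = imF s A :\: imF s B.
Proof. by apply/setP => y; rewrite !inE !imFE !inE. Qed.

Lemma ex_imF (s : {perm 'I_N}) (F : {set T}) (y : T) (P : T -> T -> bool) :
  (forall f : T, P (s @: f) y = P f ((s^-1)%g @: y)) ->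
  [exists f in imF s F, P f y] = [exists f in F, P f ((s^-1)%g @: y)].
Proof.
move=> hP; apply/existsP/existsP => [[f /andP[fF Pf]]|[f /andP[fF Pf]]].
  exists ((s^-1)%g @: f); rewrite -imFE fF /= -hP !pimKV //.
exists (s @: f); rewrite imFE pimK fF /= hP //.
Qed.

Lemma up_imF (s : {perm 'I_N}) d t k F : presv s d -> up d t k (imF s F) = imF s (up d t k F).
Proof.
move=> h; apply/setP => y; rewrite imFE !inE pim_card sfx_pim; last exact: presvV.
congr [&& _, _ & _]; apply: (@ex_imF s F y (fun f y => f \subset y)) => f; rewrite -{1}(pimKV s y) pim_sub //.
Qed.

Lemma down_imF (s : {perm 'I_N}) t k G : down t k (imF s G) = imF s (down t k G).
Proof.
apply/setP => y; rewrite imFE !inE pim_card.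
congr (_ && _); apply/existsP/existsP => [[g /andP[gG Pg]]|[g /andP[gG Pg]]].
  exists ((s^-1)%g @: g); rewrite -imFE gG /=.
  by rewrite -(pim_sub s) !pimKV.
exists (s @: g); rewrite imFE pimK gG /=.
by rewrite -(pim_sub (s^-1)%g) pimK.
Qed.

Lemma Good_imF (s : {perm 'I_N}) d k F : presv s d -> Good d k F -> Good d k (imF s F).
Proof.
move=> h G t t0 F2 F2s cF2.
have hV := presvV h.
have s2 : imF (s^-1)%g F2 \subset lev d k.
  by rewrite -(lev_imF k hV); apply: imsetS.
have [h1 h2] := G t t0 _ s2 ltac:(by rewrite imF_card cF2 imF_card).
split.
  by rewrite up_imF // imF_card; move: h1; rewrite up_imF // imF_card.
rewrite -{1}(lev_imF k h) -setD_imF down_imF imF_card.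
have e : lev d k :\: imF (s^-1)%g F2 = imF (s^-1)%g (lev d k :\: F2).
  by rewrite setD_imF lev_imF.
by move: h2; rewrite e down_imF imF_card.
Qed.

Lemma in_symdiff (x y : T) i : (i \in symdiff x y) = (i \in x) (+) (i \in y).
Proof. by rewrite /symdiff !inE; case: (i \in x); case: (i \in y). Qed.

Lemma lex_asym (x y : T) : lex_lt x y -> lex_lt y x -> False.
Proof.
case/existsP => i /andP[/andP[i1 i2] /forallP i3].
case/existsP => j /andP[/andP[j1 j2] /forallP j3].
move: i1 j1; rewrite !in_symdiff => i1 j1.
case: (ltngtP i j) => [lt|lt|eq].
- by have := j3 i; rewrite lt in_symdiff addbC i1.
- by have := i3 j; rewrite lt in_symdiff addbC j1.
- have e : i = j by apply: val_inj.
  by move: i1; rewrite i2 e j2.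
Qed.

Lemma lex_first d (D : 'I_N) (x y : T) : nat_of_ord D = d ->
  x \subset sfx d -> y \subset sfx d -> D \in x -> D \notin y -> lex_lt x y.
Proof.
move=> eD xs ys Dx Dy; apply/existsP; exists D.
rewrite in_symdiff Dx (negbTE Dy) /=; apply/forallP => j; apply/implyP => lt.
rewrite in_symdiff.
have jx : j \notin x by apply/negP => /(subsetP xs); rewrite inE; lia.
have jy : j \notin y by apply/negP => /(subsetP ys); rewrite inE; lia.
by rewrite (negbTE jx) (negbTE jy).
Qed.

Lemma lex_del (D : 'I_N) (x y : T) : D \in x -> D \in y ->
  lex_lt (y :\ D) (x :\ D) = lex_lt y x.
Proof.
move=> Dx Dy.
have e : symdiff (y :\ D) (x :\ D) = symdiff y x.
  apply/setP => i; rewrite !in_symdiff !inE.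
  by case: (eqVneq i D) => [->|]; rewrite ?Dx ?Dy.
rewrite /lex_lt e; apply: eq_existsb => i.
case h : (i \in symdiff y x) => //=.
have : i != D.
  by apply/eqP => ei; move: h; rewrite ei in_symdiff Dx Dy.
by rewrite !inE => ->.
Qed.

Section Step.
Variables (d : nat) (D : 'I_N).
Hypothesis eD : nat_of_ord D = d.

Lemma sfxS : sfx d.+1 = sfx d :\ D.
Proof.
apply/setP => i; rewrite !inE; case: (eqVneq i D) => [->|ne] /=; first lia.
have : nat_of_ord i != nat_of_ord D by [].
rewrite eD; lia.
Qed.

Lemma subS (x : T) : (x \subset sfx d.+1) = (x \subset sfx d) && (D \notin x).
Proof.
rewrite sfxS; apply/idP/andP => [h|[h1 h2]].
  split; first by apply: (subset_trans h); apply: subD1set.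
  by apply/negP => /(subsetP h); rewrite !inE eqxx.
apply/subsetP => i ix; have := subsetP h1 _ ix; rewrite !inE => ->; rewrite andbT.
by apply/eqP => e; move: h2; rewrite -e ix.
Qed.

Lemma notD (x : T) : x \subset sfx d.+1 -> D \notin x.
Proof. by rewrite subS => /andP[]. Qed.

Lemma cardU1D (z : T) : D \notin z -> #|D |: z| = #|z| + 1.
Proof. by move=> h; rewrite cardsU1 h add1n addn1. Qed.

Lemma cardD1D (y : T) : D \in y -> #|y| = #|y :\ D| + 1.
Proof. by move=> h; rewrite (cardsD1 D y) h add1n addn1. Qed.

Lemma card_aD (H : {set T}) : (forall x, x \in H -> D \notin x) ->
  #|[set D |: x | x in H]| = #|H|.
Proof.
move=> h; apply: card_in_imset => x y xH yH e.
by rewrite -(setU1K (h _ xH)) -(setU1K (h _ yH)) e.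
Qed.

Lemma up1 t k (H : {set T}) : H \subset lev d.+1 k ->
  up d t k.+1 [set D |: x | x in H] = [set D |: x | x in up d.+1 t k H].
Proof.
move=> Hs; apply/setP => y; apply/idP/imsetP.
  rewrite inE => /and3P[ys /eqP yc /existsP[f /andP[/imsetP[h hH ->] fy]]].
  have Dy : D \in y by apply: (subsetP fy); rewrite !inE eqxx.
  have hs : h \subset sfx d.+1 by move: (subsetP Hs _ hH); rewrite inE => /andP[].
  exists (y :\ D); last by rewrite setD1K.
  have yDs : y :\ D \subset sfx d by apply: subset_trans ys; apply: subD1set.
  rewrite inE subS yDs !inE eqxx /=; have := cardD1D Dy; rewrite yc => c.
  apply/andP; split.
  move: c; set q := #|y :\ D|. move=> c. apply/eqP. lia.
  apply/existsP; exists h; rewrite hH /=.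
  apply/subsetP => i ih; rewrite !inE (subsetP fy) ?andbT; last by rewrite !inE ih orbT.
  by apply/eqP => e; move: (notD hs); rewrite -e ih.
case=> z; rewrite inE => /and3P[zs /eqP zc /existsP[h /andP[hH hz]]] ->.
rewrite inE; apply/and3P; split.
- have zs' := zs; rewrite subS in zs'; case/andP: zs' => zs1 _.
  by rewrite subUset sub1set zs1 andbT inE eD leqnn.
- by rewrite cardU1D ?(notD zs) // zc addn1 addSn.
- apply/existsP; exists (D |: h); rewrite imset_f //=.
  by apply: setUS.
Qed.

Definition Zs t k : {set T} := [set x : T | (x \subset sfx d.+1) && (#|x| + t == k)].

Lemma down1 t k (H : {set T}) : H \subset lev d.+1 k -> k.+1 <= #|sfx d.+1| ->
  #|down t k.+1 (lev d k.+1 :\: [set D |: x | x in H])| =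
  #|Zs t k.+1| + #|down t k (lev d.+1 k :\: H)|.
Proof.
move=> Hs kS.
have HD : forall x, x \in H -> D \notin x.
  by move=> x /(subsetP Hs); rewrite inE => /andP[/notD].
set R := down t k (lev d.+1 k :\: H).
have RD : forall x, x \in R -> D \notin x.
  move=> x; rewrite inE => /andP[_ /existsP[g /andP[]]].
  rewrite !inE => /andP[_ /andP[/notD gD _]] xg.
  by apply/negP => /(subsetP xg); rewrite (negbTE gD).
have -> : down t k.+1 (lev d k.+1 :\: [set D |: x | x in H]) =
          Zs t k.+1 :|: [set D |: x | x in R].
  apply/setP => x; rewrite !inE; case: (boolP (D \in x)) => Dx.
  - have nZ : (x \subset sfx d.+1) = false by rewrite subS Dx andbF.
    rewrite nZ /=; apply/idP/imsetP.
    + case/andP => /eqP xc /existsP[g /andP[]].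
      rewrite !inE => /andP[gnH /andP[gs /eqP gc]] xg.
      have Dg : D \in g by apply: (subsetP xg).
      exists (x :\ D); last by rewrite setD1K.
      rewrite inE; apply/andP; split.
        by have := cardD1D Dx; set q := #|x :\ D|; move=> c; apply/eqP; rewrite c in xc; lia.
      apply/existsP; exists (g :\ D); rewrite !inE subS.
      have gsD : g :\ D \subset sfx d.
        by apply: subset_trans gs; apply: subD1set.
      rewrite gsD !inE eqxx /=.
      have := cardD1D Dg; rewrite gc => c.
      apply/andP; split; last by apply: setSD.
      apply/andP; split.
      * apply/negP => h; move: gnH; rewrite -(setD1K Dg).
        by rewrite imset_f.
      * by move: c; set q := #|g :\ D|; move=> c; apply/eqP; lia.
    + case=> x'; rewrite inE => /andP[/eqP xc /existsP[g' /andP[]]].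
      rewrite !inE => /andP[g'nH /andP[g's /eqP g'c]] x'g -> {x Dx nZ}.
      have x'D : D \notin x' by apply/negP => /(subsetP x'g) /(subsetP g's); rewrite sfxS !inE eqxx.
      rewrite cardU1D // addnAC xc addn1 eqxx /=.
      apply/existsP; exists (D |: g'); rewrite !inE; apply/andP; split; last by apply: setUS.
      apply/and3P; split.
      * apply/imsetP => [[h hH e]]; move: g'nH.
        have : g' = h.
          rewrite -(setU1K (notD g's)) e setU1K //; exact: HD.
        by move=> ->; rewrite hH.
      * by rewrite subUset sub1set !inE eD leqnn; move: g's; rewrite subS => /andP[].
      * by rewrite cardU1D ?(notD g's) // g'c; lia.
  - have nI : (x \in [set D |: x0 | x0 in R]) = false.
      apply/negP => /imsetP[z _ e]; move: Dx; rewrite e !inE eqxx.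
      done.
    rewrite nI orbF; apply/andP/andP => [[xc /existsP[g /andP[]]]|[xs xc]].
      rewrite !inE => /andP[_ /andP[gs _]] xg; split => //.
      by rewrite subS Dx andbT; apply: subset_trans gs.
    split => //.
    have h1 : #|x| <= k.+1 by move: xc => /eqP; lia.
    have [g [xg gs gc]] := ext_set xs h1 kS.
    apply/existsP; exists g; rewrite xg !inE gc eqxx andbT andbT.
    apply/andP; split.
      apply/negP => /imsetP[z _ e]; move: (notD gs); rewrite e !inE eqxx //.
    by move: gs; rewrite subS => /andP[].
rewrite cardsU ?card_aD //.
have -> : Zs t k.+1 :&: [set D |: x | x in R] = set0.
  apply/setP => x; rewrite !inE; apply/negP => /andP[/andP[xs _] /imsetP[z _ e]].
  by move: (notD xs); rewrite e !inE eqxx.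
by rewrite cards0 subn0.
Qed.

Lemma levD k (H : {set T}) x : H \subset lev d.+1 k -> x \in H -> D \notin x.
Proof. by move=> Hs /(subsetP Hs); rewrite inE => /andP[/notD]. Qed.

Lemma upD t k (H : {set T}) x : x \in up d.+1 t k H -> D \notin x.
Proof. by rewrite inE => /and3P[/notD]. Qed.

Lemma aD_lev k (H : {set T}) : H \subset lev d.+1 k ->
  [set D |: x | x in H] \subset lev d k.+1.
Proof.
move=> Hs; apply/subsetP => y /imsetP[x xH ->].
have := subsetP Hs _ xH; rewrite !inE subS => /andP[/andP[xs xD] /eqP xc].
by rewrite subUset sub1set xs inE eD leqnn cardU1D // xc addn1 eqxx.
Qed.

Definition F1' k (F1 : {set T}) : {set T} := [set x in lev d.+1 k | D |: x \in F1].

Lemma eqF1 k (F1 : {set T}) : F1 \subset lev d k.+1 -> (forall f, f \in F1 -> D \in f) ->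
  F1 = [set D |: x | x in F1' k F1].
Proof.
move=> Fs FD; apply/setP => y; apply/idP/imsetP => [yF|[x]].
  have Dy := FD _ yF; exists (y :\ D); last by rewrite setD1K.
  have := subsetP Fs _ yF; rewrite !inE => /andP[ys /eqP yc].
  rewrite setD1K // yF andbT subS !inE eqxx /=.
  have -> : y :\ D \subset sfx d by apply: subset_trans ys; apply: subD1set.
  by have := cardD1D Dy; rewrite yc; set q := #|y :\ D|; move=> c; apply/eqP; lia.
by rewrite inE => /andP[_ h] ->.
Qed.

Lemma Good1 k (F1 : {set T}) : F1 \subset lev d k.+1 -> (forall f, f \in F1 -> D \in f) ->
  k.+1 <= #|sfx d.+1| -> Good d k.+1 F1 -> Good d.+1 k (F1' k F1).
Proof.
move=> Fs FD kS G t t0 F2 F2s cF2.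
have F1s : F1' k F1 \subset lev d.+1 k by apply/subsetP => x; rewrite inE => /andP[].
have e1 := eqF1 Fs FD.
have c1 : #|F1| = #|F1' k F1| by rewrite {1}e1 card_aD // => x; exact: (levD F1s).
have c2 : #|[set D |: x | x in F2]| = #|F1| by rewrite card_aD ?cF2 -?c1 // => x; exact: (levD F2s).
have [h1 h2] := G t t0 _ (aD_lev F2s) c2.
split.
  move: h1; rewrite {1}e1 !up1 // !card_aD // => x; apply: upD.
move: h2; rewrite {1}e1 !down1 // leq_add2l //.
Qed.

Definition W k : {set T} := [set x in lev d k | D \in x].
Definition W' t k : {set T} := [set x : T | [&& x \subset sfx d, D \in x & #|x| == k + t]].

Lemma cardWU k (H : {set T}) : H \subset lev d.+1 k -> #|W k :|: H| = #|W k| + #|H|.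
Proof.
move=> Hs; rewrite cardsU.
have -> : W k :&: H = set0.
  apply/setP => x; rewrite !inE; apply/negP => /andP[/andP[_ Dx] xH].
  by move: (levD Hs xH); rewrite Dx.
by rewrite cards0 subn0.
Qed.

Lemma up2 t k (H : {set T}) : 0 < k -> H \subset lev d.+1 k ->
  #|up d t k (W k :|: H)| = #|W' t k| + #|up d.+1 t k H|.
Proof.
move=> k0 Hs.
have -> : up d t k (W k :|: H) = W' t k :|: up d.+1 t k H.
  apply/setP => y; rewrite !inE; case: (boolP (D \in y)) => Dy /=.
  - have -> : (y \subset sfx d.+1) = false by rewrite subS Dy andbF.
    rewrite /= orbF; apply/and3P/andP => [[ys yc _]|[ys yc]] //.
    split => //.
    have s1 : [set D] \subset y by rewrite sub1set.
    have h1 : #|[set D]| <= k by rewrite cards1.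
    have h2 : k <= #|y| by move/eqP: yc => ->; lia.
    have [w [w1 w2 w3]] := ext_set s1 h1 h2.
    apply/existsP; exists w; rewrite w2 !inE (subset_trans w2 ys) w3 eqxx /=.
    by rewrite (subsetP w1) // inE.
  - rewrite subS Dy andbT andbF /=; apply/and3P/and3P => [[ys yc /existsP[f /andP[]]]|[ys yc /existsP[f /andP[fH fy]]]].
      rewrite !inE => /orP[/andP[_ Df]|fH] fy.
        by move: Dy; rewrite (subsetP fy).
      by split => //; apply/existsP; exists f; rewrite fH.
    by split => //; apply/existsP; exists f; rewrite !inE fH orbT.
rewrite cardsU.
have -> : W' t k :&: up d.+1 t k H = set0.
  apply/setP => x; rewrite !inE; apply/negP => /andP[/and3P[_ Dx _] xu].
  by move: (@upD t k H x); rewrite inE xu Dx => /(_ isT).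
by rewrite cards0 subn0.
Qed.

Lemma lev2 k (H : {set T}) : H \subset lev d.+1 k ->
  lev d k :\: (W k :|: H) = lev d.+1 k :\: H.
Proof.
move=> Hs; apply/setP => x; rewrite !inE subS.
case: (boolP (D \in x)) => Dx /=; last by rewrite !andbT andbF.
by rewrite !andbT !andbF; case: (x \subset sfx d); case: (#|x| == k); rewrite /= ?andbF...
Qed.

Lemma eqF2 k (F1 : {set T}) : F1 \subset lev d k ->
  (forall x, x \in lev d k -> D \in x -> x \in F1) ->
  F1 = W k :|: (F1 :&: lev d.+1 k).
Proof.
move=> Fs FD; apply/setP => x; rewrite !inE subS.
case: (boolP (x \in F1)) => xF /=.
  have := subsetP Fs _ xF; rewrite inE => /andP[-> ->] /=.
  by case: (D \in x).
case: (boolP (D \in x)) => Dx /=; rewrite ?andbT ?andbF ?orbF //.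
apply/esym/negP => /andP[xs xc]; move/negP: xF; apply; apply: FD => //.
by rewrite inE xs xc.
Qed.

Lemma Good2 k (F1 : {set T}) : 0 < k -> F1 \subset lev d k ->
  (forall x, x \in lev d k -> D \in x -> x \in F1) ->
  Good d k F1 -> Good d.+1 k (F1 :&: lev d.+1 k).
Proof.
move=> k0 Fs FD G t t0 F2 F2s cF2.
have Is : F1 :&: lev d.+1 k \subset lev d.+1 k by apply: subsetIr.
have e := eqF2 Fs FD.
have F2us : W k :|: F2 \subset lev d k.
  rewrite subUset; apply/andP; split; first by apply/subsetP => x; rewrite inE => /andP[].
  apply/subsetP => x /(subsetP F2s); rewrite !inE subS => /andP[/andP[-> _] ->] //.
have [h1 h2] := G t t0 _ F2us ltac:(by rewrite cardWU // [in RHS]e cardWU // cF2).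
split.
  by move: h1; rewrite {1}e !up2 // leq_add2l.
by move: h2; rewrite {1}e !lev2.
Qed.

Lemma fixlt_D (sg : {perm 'I_N}) : fixlt sg d.+1 -> sg D = D.
Proof. by move=> h; apply: h; rewrite eD. Qed.

Lemma fixlt_le (sg : {perm 'I_N}) : fixlt sg d.+1 -> fixlt sg d.
Proof. by move=> h i lt; apply: h; lia. Qed.

Lemma memD_pimV (sg : {perm 'I_N}) (x : T) : sg D = D -> (D \in (sg^-1)%g @: x) = (D \in x).
Proof. by move=> h; rewrite pimE invgK h. Qed.

Lemma pimV_D1 (sg : {perm 'I_N}) (x : T) : sg D = D ->
  (sg^-1)%g @: (x :\ D) = ((sg^-1)%g @: x) :\ D.
Proof.
move=> h; apply/setP => i; rewrite !inE !pimE !inE invgK.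
congr (~~ _ && _); apply/eqP/eqP => [e|->//].
by apply: (perm_inj (s := sg)); rewrite e h.
Qed.

Lemma lev_pim (sg : {perm 'I_N}) (y : T) k : presv sg d ->
  (sg @: y \in lev d k) = (y \in lev d k).
Proof. by move=> h; rewrite !inE pim_card sfx_pim. Qed.

Lemma levS (y : T) k : (y \in lev d.+1 k) = (y \in lev d k) && (D \notin y).
Proof. by rewrite !inE subS; case: (D \in y); rewrite /= ?andbF ?andbT. Qed.

Lemma levS1 (z : T) k : z \in lev d k.+1 -> D \in z -> z :\ D \in lev d.+1 k.
Proof.
rewrite levS !inE eqxx /= => /andP[zs /eqP zc] Dz.
have -> : z :\ D \subset sfx d by apply: subset_trans zs; apply: subD1set.
by have := cardD1D Dz; rewrite zc; set q := #|z :\ D|; move=> c; apply/eqP; lia.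
Qed.

Lemma lev_sfx (z : T) k : z \in lev d k -> z \subset sfx d.
Proof. by rewrite inE => /andP[]. Qed.

Lemma lex1 (sg : {perm 'I_N}) k (F1 : {set T}) : fixlt sg d.+1 ->
  F1 \subset lev d k.+1 -> (forall f, f \in F1 -> D \in f) ->
  lexdc d.+1 k (imF sg (F1' k F1)) -> lexdc d k.+1 (imF sg F1).
Proof.
move=> fs Fs FD IH x y; rewrite !imFE => xF yl lt.
have sD := fixlt_D fs.
have pV := presvV (fixlt_presv (fixlt_le fs)).
have xl : (sg^-1)%g @: x \in lev d k.+1 by apply: (subsetP Fs).
have Dx : D \in x by rewrite -(memD_pimV x sD); apply: FD.
have xs : x \subset sfx d by apply: (@lev_sfx _ k.+1); rewrite -(lev_pim _ _ pV).
have Dy : D \in y.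
  case: (boolP (D \in y)) => // Dy; exfalso; apply: (lex_asym lt); apply: (lex_first eD) => //.
  exact: (lev_sfx yl).
have yl' : (sg^-1)%g @: y \in lev d k.+1 by rewrite lev_pim.
have h := IH (x :\ D) (y :\ D).
have : (sg^-1)%g @: (y :\ D) \in F1' k F1.
  rewrite -imFE; apply: h.
  - rewrite imFE inE pimV_D1 // levS1 //=; last by rewrite memD_pimV.
    by rewrite setD1K // memD_pimV.
  - exact: (levS1 yl Dy).
  - by rewrite (lex_del Dx Dy).
by rewrite inE pimV_D1 // setD1K ?memD_pimV // => /andP[].
Qed.

Lemma lex2 (sg : {perm 'I_N}) k (F1 : {set T}) : fixlt sg d.+1 ->
  F1 \subset lev d k -> (forall x, x \in lev d k -> D \in x -> x \in F1) ->
  lexdc d.+1 k (imF sg (F1 :&: lev d.+1 k)) -> lexdc d k (imF sg F1).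
Proof.
move=> fs Fs FD IH x y; rewrite !imFE => xF yl lt.
have sD := fixlt_D fs.
have pV := presvV (fixlt_presv (fixlt_le fs)).
have xl : (sg^-1)%g @: x \in lev d k by apply: (subsetP Fs).
have yl' : (sg^-1)%g @: y \in lev d k by rewrite lev_pim.
case: (boolP (D \in y)) => Dy.
  by apply: FD => //; rewrite memD_pimV.
have xs : x \subset sfx d by apply: (@lev_sfx _ k); rewrite -(lev_pim _ _ pV).
have Dx : D \notin x.
  apply/negP => Dx; apply: (lex_asym lt); apply: (lex_first eD) => //.
  exact: (lev_sfx yl).
have : y \in imF sg (F1 :&: lev d.+1 k).
  apply: (IH x y) => //.
    by rewrite imFE inE xF levS xl memD_pimV.
  by rewrite levS yl Dy.
by rewrite imFE inE => /andP[].
Qed.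

Lemma Dsfx : D \in sfx d.
Proof. by rewrite inE eD. Qed.

Lemma sub_eq (x S : T) : x \subset S -> #|S| <= #|x| -> x = S.
Proof. by move=> h c; apply/eqP; rewrite eqEcard h c. Qed.

Lemma miss (y S : T) : #|y| < #|S| -> exists2 i, i \in S & i \notin y.
Proof.
move=> c; have : ~~ (S \subset y).
  by apply/negP => /subset_leq_card; lia.
by case/subsetPn => i iS iy; exists i.
Qed.

Lemma sub_setD1 (z S : T) i : z \subset S -> i \notin z -> z \subset S :\ i.
Proof.
move=> zs iz; apply/subsetP => j jz; rewrite in_setD1 (subsetP zs _ jz) andbT.
by apply/eqP => e; move: iz; rewrite -e jz.
Qed.

Lemma kbounds s k (F : {set T}) f0 g0 : #|sfx d| = s.+1 -> F \subset lev d k ->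
  f0 \in F -> g0 \in lev d k :\: F -> 0 < k /\ k <= s.
Proof.
move=> cs Fs f0F; rewrite inE => /andP[g0F g0l].
have f0l := subsetP Fs _ f0F.
move: (f0l) (g0l); rewrite !inE => /andP[f0s /eqP f0c] /andP[g0s /eqP g0c].
split.
  case: k f0c g0c {Fs f0l g0l} => // f0c g0c.
  move: f0c g0c => /eqP; rewrite cards_eq0 => /eqP e1 /eqP; rewrite cards_eq0 => /eqP e2.
  by move: g0F; rewrite e2 -e1 f0F.
case: (leqP k s) => // ks.
have e1 := sub_eq f0s ltac:(by rewrite f0c cs).
have e2 := sub_eq g0s ltac:(by rewrite g0c cs).
by move: g0F; rewrite e2 -e1 f0F.
Qed.

Lemma findA s k (F : {set T}) f0 g0 : #|sfx d| = s.+1 -> F \subset lev d k -> Good d k F ->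
  f0 \in F -> g0 \in lev d k :\: F ->
  exists2 a, a \in sfx d &
    (forall f, f \in F -> a \in f) \/ (forall x, x \in lev d k -> a \in x -> x \in F).
Proof.
move=> cs Fs G f0F g0l.
have [k0 ks] := kbounds cs Fs f0F g0l.
have Wl : W k \subset lev d k by apply/subsetP => x; rewrite inE => /andP[].
case: (leqP #|F| #|W k|) => hW.
  case: (eqVneq k s) => [ek|nk].
    move: g0l; rewrite !inE => /andP[g0F /andP[g0s /eqP g0c]].
    have [i iS ig] := miss (y := g0) (S := sfx d) ltac:(by rewrite g0c cs; lia).
    exists i => //; left => f fF.
    case: (boolP (i \in f)) => // nf; exfalso.
    have fl := subsetP Fs _ fF; move: fl; rewrite inE => /andP[fs /eqP fc].
    have cD : #|sfx d :\ i| = s by move: cs; rewrite (cardsD1 i) iS add1n => [[]].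
    have sub1 := @sub_setD1 _ (sfx d) i.
    have e1 := sub_eq (sub1 _ fs nf) ltac:(by rewrite cD fc ek).
    have e2 := sub_eq (sub1 _ g0s ig) ltac:(by rewrite cD g0c ek).
    by move: g0F; rewrite e2 -e1 fF.
  case: (boolP [exists a, (a \in sfx d) && [forall f in F, a \in f]]).
    case/existsP => a /andP[aS /forallP h]; exists a => //; left => f fF.
    exact: (implyP (h f) fF).
  move/existsPn => hn; exfalso.
  have hA : forall a, a \in sfx d -> exists2 f, f \in F & a \notin f.
    move=> a aS; have := hn a; rewrite aS /= negb_forall => /existsP[f].
    by rewrite negb_imply => /andP[fF af]; exists f.
  have [F2 [_ F2W cF2]] := ext_set (x := set0) (S := W k) (j := #|F|) (sub0set _) ltac:(by rewrite cards0) hW.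
  have F2l : F2 \subset lev d k by apply: subset_trans Wl.
  have [h1 _] := G (s - k) ltac:(lia) F2 F2l cF2.
  have : up d (s - k) k F2 \proper up d (s - k) k F.
    rewrite properE; apply/andP; split.
      apply/subsetP => y; rewrite !inE => /and3P[ys yc /existsP[f2 /andP[f2F f2y]]].
      rewrite ys yc /=.
      have [i iS iy] := miss (y := y) (S := sfx d) ltac:(by rewrite (eqP yc) cs (subnKC ks) ltnSn).
      have [f fF fi] := hA i iS.
      apply/existsP; exists f; rewrite fF /=.
      have fs : f \subset sfx d by have := subsetP Fs _ fF; rewrite inE => /andP[].
      have ye : y = sfx d :\ i.
        apply: sub_eq; first exact: sub_setD1.
        have c1 : #|sfx d :\ i| = s by move: cs; rewrite (cardsD1 i) iS add1n => [[]].
        by rewrite c1 (eqP yc) (subnKC ks).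
      by rewrite ye; apply: sub_setD1.
    apply/subsetPn; exists (sfx d :\ D).
      rewrite inE subD1set /=; apply/andP; split.
        have c1 : #|sfx d :\ D| = s by move: cs; rewrite (cardsD1 D) Dsfx add1n => [[]].
        by rewrite c1 (subnKC ks).
      have [f fF fD] := hA D Dsfx; apply/existsP; exists f; rewrite fF /=.
      have fs : f \subset sfx d by have := subsetP Fs _ fF; rewrite inE => /andP[].
      exact: sub_setD1.
    rewrite inE; apply/negP => /and3P[_ _ /existsP[f2 /andP[f2F f2s]]].
    have := subsetP F2W _ f2F; rewrite inE => /andP[_ Df2].
    by have := subsetP f2s _ Df2; rewrite !inE eqxx.
  by move/proper_card; lia.
case: (eqVneq k 1) => [k1|k1].
  move: (subsetP Fs _ f0F); rewrite inE k1 => /andP[f0s /cards1P[a ea]].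
  exists a; first by apply: (subsetP f0s); rewrite ea inE.
  right => x; rewrite inE => /andP[_ /cards1P[b eb]]; rewrite eb inE => /eqP <-.
  by rewrite -ea.
case: (boolP [exists a, (a \in sfx d) && [forall x in lev d k, (a \in x) ==> (x \in F)]]).
  case/existsP => a /andP[aS /forallP h]; exists a => //; right => x xl ax.
  by have := h x; rewrite xl ax.
move/existsPn => hn; exfalso.
have hA : forall a, a \in sfx d -> exists2 x, x \in lev d k :\: F & a \in x.
  move=> a aS; have := hn a; rewrite aS /= negb_forall => /existsP[x].
  rewrite negb_imply negb_imply => /andP[xl /andP[ax xF]]; exists x => //.
  by rewrite inE xF xl.
have cF : #|F| <= #|lev d k| by apply: subset_leq_card.
have cLW : #|lev d k :\: W k| = #|lev d k| - #|W k|.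
  by rewrite cardsD (setIidPr Wl).
have [E [_ Es cE]] := ext_set (x := set0) (S := lev d k :\: W k) (j := #|F| - #|W k|)
   (sub0set _) ltac:(by rewrite cards0) ltac:(rewrite cLW; lia).
have F2l : W k :|: E \subset lev d k.
  by rewrite subUset Wl (subset_trans Es) // subsetDl.
have cF2 : #|W k :|: E| = #|F|.
  rewrite cardsU.
  have -> : W k :&: E = set0.
    apply/setP => x; rewrite !inE; apply/negP => /andP[xW xE].
    by move: (subsetP Es _ xE); rewrite !inE xW.
  by rewrite cards0 subn0 cE; lia.
have [_ h2] := G (k - 1) ltac:(lia) _ F2l cF2.
have : down (k - 1) k (lev d k :\: (W k :|: E)) \proper down (k - 1) k (lev d k :\: F).
  rewrite properE; apply/andP; split.
    apply/subsetP => y; rewrite !inE => /andP[yc /existsP[g /andP[gl yg]]].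
    rewrite yc /=.
    have : #|y| == 1 by apply/eqP; apply: (aux1 k0); apply/eqP; exact: yc.
    case/cards1P => i ey.
    have ig : i \in g by apply: (subsetP yg); rewrite ey inE.
    have iS : i \in sfx d.
      by move: gl; rewrite in_setD => /andP[_ gl]; apply: (subsetP (lev_sfx gl)).
    have [x xl ix] := hA i iS.
    apply/existsP; exists x; rewrite xl /= ey sub1set //.
  apply/subsetPn; exists [set D].
    rewrite inE cards1; apply/andP; split; first by apply/eqP; lia.
    have [x xl Dx] := hA D Dsfx.
    by apply/existsP; exists x; rewrite xl sub1set.
  rewrite inE; apply/negP => /andP[_ /existsP[g /andP[gl Dg]]].
  move: gl; rewrite !inE => /andP[/negP gn gl]; apply: gn.
  have Dg' : D \in g by apply: (subsetP Dg); rewrite inE.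
  by rewrite gl Dg'.
by move/proper_card; lia.
Qed.

End Step.

Lemma imF1 (F : {set T}) : imF 1%g F = F.
Proof.
apply/setP => y; rewrite imFE; congr (_ \in F).
by apply/setP => i; rewrite pimE !invg1 perm1.
Qed.

Lemma fixlt1 d : fixlt 1%g d.
Proof. by move=> i _; rewrite perm1. Qed.

Lemma main s : forall d k (F : {set T}), #|sfx d| = s -> F \subset lev d k -> Good d k F ->
  exists sg : {perm 'I_N}, fixlt sg d /\ lexdc d k (imF sg F).
Proof.
elim: s => [|s IH] d k F cs Fs G.
  exists 1%g; split; first exact: fixlt1.
  rewrite imF1 => x y xF yl lt; exfalso.
  have s0 : sfx d = set0 by apply/eqP; rewrite -cards_eq0 cs.
  have xl := subsetP Fs _ xF.
  have ex : x = set0 by apply/eqP; rewrite -subset0 -s0; exact: (lev_sfx xl).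
  have ey : y = set0 by apply/eqP; rewrite -subset0 -s0; exact: (lev_sfx yl).
  by move: lt; rewrite ex ey => lt; apply: (lex_asym lt lt).
have [i iS] : exists i, i \in sfx d by apply/card_gt0P; rewrite cs.
have dN : d < N by move: iS; rewrite inE => h; have := ltn_ord i; lia.
pose D := Ordinal dN; have eD : nat_of_ord D = d by [].
have cs' : #|sfx d.+1| = s.
  by move: cs; rewrite (sfxS eD) (cardsD1 D) (Dsfx eD) add1n => [[]].
case: (boolP (F == set0)) => [/eqP F0|Fn0].
  by exists 1%g; split; [exact: fixlt1|rewrite imF1 F0 => x y; rewrite inE].
case: (boolP (lev d k \subset F)) => [lF|lF].
  exists 1%g; split; first exact: fixlt1.
  by rewrite imF1 => x y _ yl _; apply: (subsetP lF).
have [f0 f0F] := set0Pn _ Fn0.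
have [g0 g0l g0F] := subsetPn lF.
have g0l' : g0 \in lev d k :\: F by rewrite inE g0F g0l.
have [kk0 ks] := kbounds cs Fs f0F g0l'.
have [a aS hA] := findA eD cs Fs G f0F g0l'.
pose tau := tperm a D.
have pt : presv tau d.
  move=> j; rewrite /tau; case: tpermP => [->|->|//]; move: aS; rewrite inE eD => ->.
  - by rewrite leqnn.
  - by rewrite leqnn.
have F1s : imF tau F \subset lev d k by rewrite -(lev_imF k pt); apply: imsetS.
have G1 : Good d k (imF tau F) := Good_imF pt G.
have fix_tau : forall j : 'I_N, j < d -> tau j = j.
  move=> j lt; rewrite /tau tpermD //; apply/eqP => e.
    by move: lt aS; rewrite -e inE => h1 h2; move: (leq_ltn_trans h2 h1); rewrite ltnn.
  by move: lt; rewrite -e eD ltnn.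
have taD : forall x : T, (a \in (tau^-1)%g @: x) = (D \in x).
  by move=> x; rewrite pimE invgK /tau tpermL.
case: hA => hA.
  have FD : forall f, f \in imF tau F -> D \in f.
    by move=> f; rewrite imFE => h; rewrite -taD; apply: hA.
  have [k' ek] : exists k', k = k'.+1 by exists k.-1; rewrite prednK.
  subst k.
  have F1s' : F1' d D k' (imF tau F) \subset lev d.+1 k'.
    by apply/subsetP => x; rewrite inE => /andP[].
  have [sg [fs lx]] := IH d.+1 k' _ cs' F1s' (Good1 eD F1s FD ltac:(by rewrite cs') G1).
  exists (tau * sg)%g; split.
    by move=> j lt; rewrite permM fix_tau // fs //; exact: ltnW.
  by rewrite imF_comp; apply: (lex1 eD fs F1s FD lx).
have FD : forall x, x \in lev d k -> D \in x -> x \in imF tau F.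
  move=> x xl Dx; rewrite imFE; apply: hA; last by rewrite taD.
  by rewrite lev_pim //; exact: presvV.
have [sg [fs lx]] := IH d.+1 k _ cs' (subsetIr _ _) (Good2 eD kk0 F1s FD G1).
exists (tau * sg)%g; split.
  by move=> j lt; rewrite permM fix_tau // fs //; exact: ltnW.
by rewrite imF_comp; apply: (lex2 eD fs F1s FD lx).
Qed.

End Main.

Section Cube.
Variable n : nat.
Notation T := {set 'I_n}.

Lemma dcard (x y : T) : [/\ dist x y = #|x :\: y| + #|y :\: x|,
   #|x| = #|x :&: y| + #|x :\: y| & #|y| = #|x :&: y| + #|y :\: x|].
Proof.
split; last by rewrite setIC cardsID.
  rewrite /dist /symdiff cardsU.
  have -> : (x :\: y) :&: (y :\: x) = set0.
    by apply/setP => i; rewrite !inE; case: (i \in x); case: (i \in y).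
  by rewrite cards0 subn0.
by rewrite cardsID.
Qed.

Lemma dist_le1 (x y : T) : #|x| <= #|y| + dist x y.
Proof. by case: (dcard x y) => -> -> ->; lia. Qed.
Lemma dist_le2 (x y : T) : #|y| <= #|x| + dist x y.
Proof. by case: (dcard x y) => -> -> ->; lia. Qed.

Lemma dist_sub (x y : T) : #|y| + dist x y <= #|x| -> y \subset x.
Proof.
case: (dcard x y) => -> -> -> h; rewrite -setD_eq0 -cards_eq0; apply/eqP; lia.
Qed.

Lemma dist_subE (x y : T) : x \subset y -> dist x y = #|y| - #|x|.
Proof.
move=> h; case: (dcard x y) => -> -> ->.
have -> : x :\: y = set0 by apply/eqP; rewrite setD_eq0.
rewrite cards0; lia.
Qed.

Lemma distC (x y : T) : dist x y = dist y x.
Proof. by rewrite /dist /symdiff setUC. Qed.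

Definition Lk (k : nat) : {set T} := [set x : T | #|x| < k].

Lemma sfx0 : sfx n 0 = setT.
Proof. by apply/setP => i; rewrite !inE. Qed.

Lemma NB t k (H : {set T}) : 0 < k -> H \subset lev n 0 k ->
  #|nbhd t (Lk k :|: H)| = #|Lk (k + t)| + #|up 0 t k H|.
Proof.
move=> k0 Hs.
have -> : nbhd t (Lk k :|: H) = Lk (k + t) :|: up 0 t k H.
  apply/setP => x; rewrite !inE sfx0 subsetT /=; apply/existsP/idP.
    case=> y /andP[]; rewrite !inE => /orP[yL|yH] dxy.
      have := dist_le1 x y => h; have lt : #|x| < k + t by lia.
      by rewrite lt.
    have yk : #|y| = k by move: (subsetP Hs _ yH); rewrite inE => /andP[_ /eqP].
    case: (ltnP #|x| (k + t)) => //= lt.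
    have hle := dist_le1 x y.
    have ex : #|x| = k + t.
      by move: lt hle yk dxy; set a := #|x|; set b := #|y|; set c := dist x y; lia.
    rewrite ex eqxx /=; apply/existsP; exists y; rewrite yH /=.
    apply: dist_sub; lia.
  case/orP => [xL|/andP[/eqP xc /existsP[f /andP[fH fx]]]].
    have [y [_ yx yc]] := ext_set (x := set0) (S := x) (j := minn #|x| k.-1)
      (sub0set _) ltac:(by rewrite cards0) (geq_minl _ _).
    exists y; rewrite !inE yc; apply/andP; split; first by apply/orP; left; lia.
    rewrite distC dist_subE // yc; move: xL; set a := #|x|; lia.
  exists f; rewrite !inE fH orbT /= distC dist_subE // xc.
  have : #|f| = k by move: (subsetP Hs _ fH); rewrite inE => /andP[_ /eqP].
  lia.
rewrite cardsU.
have -> : Lk (k + t) :&: up 0 t k H = set0.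
  apply/setP => x; rewrite !inE; apply/negP => /andP[lt /and3P[_ /eqP e _]]; lia.
by rewrite cards0 subn0.
Qed.

Lemma NBc t k (H : {set T}) : k < n -> H \subset lev n 0 k ->
  #|nbhd t (~: (Lk k :|: H))| = #|[set x : T | k < #|x| + t]| + #|down t k (lev n 0 k :\: H)|.
Proof.
move=> kn Hs.
have -> : nbhd t (~: (Lk k :|: H)) = [set x : T | k < #|x| + t] :|: down t k (lev n 0 k :\: H).
  apply/setP => x; rewrite !inE; apply/existsP/idP.
    case=> y /andP[]; rewrite !inE negb_or -leqNgt => /andP[yk yH] dxy.
    have h2 := dist_le2 x y.
    case: (ltnP k (#|x| + t)) => //= lt.
    have [e1 e2] : #|y| = k /\ #|x| + t = k.
      by move: yk h2 lt dxy; set a := #|x|; set b := #|y|; set c := dist x y; lia.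
    rewrite e2 eqxx /=; apply/existsP; exists y; rewrite !inE yH e1 sfx0 subsetT eqxx /=.
    rewrite distC in dxy; apply: dist_sub; lia.
  case/orP => [lt|/andP[/eqP xc /existsP[g /andP[]]]].
    have [y [xy _ yc]] := ext_set (x := x) (S := setT) (j := maxn #|x| k.+1)
      (subsetT _) (leq_maxl _ _) ltac:(by rewrite cardsT geq_max max_card /= card_ord kn).
    exists y; rewrite !inE negb_or yc -leqNgt; apply/andP; split.
      apply/andP; split; first by lia.
      apply/negP => /(subsetP Hs); rewrite inE => /andP[_ /eqP]; lia.
    by rewrite dist_subE // yc; lia.
  rewrite !inE => /andP[gH /andP[_ /eqP gc]] xg.
  exists g; rewrite !inE negb_or gH gc ltnn /= dist_subE // gc; lia.
rewrite cardsU.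
have -> : [set x : T | k < #|x| + t] :&: down t k (lev n 0 k :\: H) = set0.
  apply/setP => x; rewrite !inE; apply/negP => /andP[lt /andP[/eqP e _]]; lia.
by rewrite cards0 subn0.
Qed.

End Cube.

Section Final.
Variable n : nat.
Notation T := {set 'I_n}.

Definition phi (t0 x : T) : T := symdiff x t0.

Lemma phiK t0 : involutive (phi t0).
Proof. by move=> x; apply/setP => i; rewrite /phi !in_symdiff addbK. Qed.

Lemma phi_dist t0 x y : dist (phi t0 x) (phi t0 y) = dist x y.
Proof.
rewrite /dist; congr #|pred_of_set _|; apply/setP => i; rewrite !in_symdiff /phi ?in_symdiff.
by case: (i \in x); case: (i \in y); case: (i \in t0).
Qed.

Lemma dist_phi0 t0 x : dist t0 (phi t0 x) = #|x|.
Proof.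
rewrite /dist; congr #|pred_of_set _|; apply/setP => i; rewrite !in_symdiff /phi ?in_symdiff.
by case: (i \in x); case: (i \in t0).
Qed.

Lemma mem_phi t0 (X : {set T}) x : (x \in phi t0 @: X) = (phi t0 x \in X).
Proof.
apply/imsetP/idP => [[y yX ->]|h]; first by rewrite phiK.
by exists (phi t0 x); rewrite ?phiK.
Qed.

Lemma card_phi t0 (X : {set T}) : #|phi t0 @: X| = #|X|.
Proof. by apply: card_imset; apply: (can_inj (phiK t0)). Qed.

Lemma nbhd_phi t0 t (X : {set T}) : nbhd t (phi t0 @: X) = phi t0 @: nbhd t X.
Proof.
apply/setP => x; rewrite mem_phi !inE; apply/existsP/existsP => [[y /andP[yX dy]]|[y /andP[yX dy]]].
  by exists (phi t0 y); rewrite -mem_phi yX /= phi_dist.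
exists (phi t0 y); rewrite mem_phi phiK yX /=.
by rewrite -(phi_dist t0) phiK.
Qed.

Lemma compl_phi t0 (X : {set T}) : ~: (phi t0 @: X) = phi t0 @: ~: X.
Proof. by apply/setP => x; rewrite !inE !mem_phi inE. Qed.

Lemma phi_setK t0 (X : {set T}) : phi t0 @: (phi t0 @: X) = X.
Proof. by apply/setP => x; rewrite !mem_phi phiK. Qed.

Lemma min_phi t0 t (X : {set T}) : nbhd_minimal t X -> nbhd_minimal t (phi t0 @: X).
Proof.
move=> m B cB; rewrite nbhd_phi card_phi.
have := m (phi t0 @: B); rewrite nbhd_phi !card_phi; apply.
by rewrite cB card_phi.
Qed.

Lemma ext_phi t0 (A : {set T}) : extremal A -> extremal (phi t0 @: A).
Proof.
move=> e t tp; have [m1 m2] := e t tp; split; first exact: min_phi.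
by rewrite compl_phi; apply: min_phi.
Qed.

Lemma cardLU k (H : {set T}) : H \subset lev n 0 k -> #|Lk n k :|: H| = #|Lk n k| + #|H|.
Proof.
move=> Hs; rewrite cardsU.
have -> : Lk n k :&: H = set0.
  apply/setP => x; rewrite !inE; apply/negP => /andP[xk xH].
  by move: (subsetP Hs _ xH); rewrite inE => /andP[_ /eqP e]; move: xk; rewrite e ltnn.
by rewrite cards0 subn0.
Qed.

Lemma pim_symdiff (sg : {perm 'I_n}) (x y : T) : sg @: symdiff x y = symdiff (sg @: x) (sg @: y).
Proof. by apply/setP => i; rewrite pimE !in_symdiff !pimE. Qed.

End Final.

Theorem proposition6 (n : nat) (A : {set {set 'I_n}}) :
  extremal A ->
  (exists (t : {set 'I_n}) (r : int), ball t r \subset A /\ A \subset ball t (r + 1)%R) ->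
  exists S : {set {set 'I_n}}, sim_initial_segment S /\ cube_isomorphic A S.
Proof.
move=> ext [t0 [r [h1 h2]]].
pose A0 := phi t0 @: A.
have e0 : extremal A0 by apply: ext_phi.
have memA0 : forall x, (x \in A0) = (phi t0 x \in A) by move=> x; rewrite mem_phi.
have [k [hk1 hk2]] : exists k, Lk n k \subset A0 /\ A0 \subset [set x : {set 'I_n} | #|x| <= k].
  case: r h1 h2 => m h1 h2.
    exists m.+1; split; apply/subsetP => x.
      rewrite inE memA0 => xk; apply: (subsetP h1); rewrite inE dist_phi0.
      by rewrite lez_nat -ltnS.
    rewrite memA0 => /(subsetP h2); rewrite !inE dist_phi0 => h.
    by rewrite -lez_nat -addn1 PoszD.
  exists 0; split; apply/subsetP => x; first by rewrite inE ltn0.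
  rewrite memA0 => /(subsetP h2); rewrite !inE dist_phi0 NegzE => h.
  by move: h; lia.
pose F := [set x in A0 | #|x| == k].
have eA : A0 = Lk n k :|: F.
  apply/setP => x; rewrite !inE; apply/idP/idP => [xA|/orP[xk|/andP[//]]].
    rewrite xA /=; have := subsetP hk2 _ xA; rewrite inE leq_eqVlt orbC.
    by [].
  by apply: (subsetP hk1); rewrite inE.
have Fs : F \subset lev n 0 k.
  by apply/subsetP => x; rewrite !inE sfx0 subsetT => /andP[].
have [sg hsg] : exists sg : {perm 'I_n}, sim_initial_segment (imF sg A0).
  case: (boolP (F == set0)) => [/eqP F0|Fn0].
    exists 1%g; rewrite imF1 eA F0 setU0 => x y; rewrite !inE => xk.
    by rewrite /sim_lt => /orP[h|/andP[/eqP e _]]; [exact: (ltn_trans h xk)|rewrite e].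
  case: (boolP (lev n 0 k \subset F)) => [lF|lF].
    have eA' : A0 = [set x : {set 'I_n} | #|x| <= k].
      apply/eqP; rewrite eqEsubset hk2 /=; apply/subsetP => x; rewrite inE leq_eqVlt.
      case/orP => [/eqP xk|xk]; last by apply: (subsetP hk1); rewrite inE.
      have : x \in F by apply: (subsetP lF); rewrite inE sfx0 subsetT xk eqxx.
      by rewrite inE => /andP[].
    exists 1%g; rewrite imF1 eA' => x y; rewrite !inE => xk.
    by rewrite /sim_lt => /orP[h|/andP[/eqP e _]]; [exact: (leq_trans (ltnW h) xk)|rewrite e].
  have [f0 f0F] := set0Pn _ Fn0.
  have [g0 g0l g0F] := subsetPn lF.
  have g0l' : g0 \in lev n 0 k :\: F by rewrite inE g0F g0l.
  have [i _] : exists i : 'I_n, true.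
    case: (pickP (fun i : 'I_n => true)) => [i _|h]; first by exists i.
    have e : f0 = g0 by apply/setP => i; have := h i.
    by move: g0F; rewrite -e f0F.
  have n0 : 0 < n := leq_ltn_trans (leq0n _) (ltn_ord i).
  have cs : #|sfx n 0| = n.-1.+1 by rewrite sfx0 cardsT card_ord prednK.
  have [kk0 ks] := kbounds cs Fs f0F g0l'.
  have kn : k < n by rewrite -(prednK n0) ltnS.
  have G : Good 0 k F.
    move=> t tp F2 F2s cF2.
    have cB : #|Lk n k :|: F2| = #|A0| by rewrite eA !cardLU // cF2.
    have [m1 m2] := e0 t tp.
    split.
      have := m1 _ cB; rewrite {1}eA !NB //; rewrite leq_add2l //.
    have cBc : #|~: (Lk n k :|: F2)| = #|~: A0|.
      by apply/eqP; rewrite -(eqn_add2l #|Lk n k :|: F2|) cardsC cB cardsC.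
    by have := m2 _ cBc; rewrite {1}eA !NBc // leq_add2l.
  have [sg [_ lx]] := @main n _ 0 k F cs Fs G.
  exists sg => x y; rewrite !imFE => xA lt.
  have cx : #|(sg^-1)%g @: x| = #|x| by rewrite pim_card.
  have cy : #|(sg^-1)%g @: y| = #|y| by rewrite pim_card.
  have xk : #|x| <= k by rewrite -cx; have := subsetP hk2 _ xA; rewrite inE.
  move: lt; rewrite /sim_lt => /orP[lt|/andP[/eqP e lxy]].
    by apply: (subsetP hk1); rewrite inE cy; exact: (leq_trans lt xk).
  case: (ltnP #|x| k) => xk'.
    by apply: (subsetP hk1); rewrite inE cy e.
  have xF : x \in imF sg F.
    by rewrite imFE inE xA cx eqn_leq xk xk'.
  have yl : y \in lev n 0 k.
    by rewrite inE sfx0 subsetT e eqn_leq xk xk'.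
  have := lx x y xF yl lxy; rewrite imFE inE => /andP[] //.
exists (imF sg A0); split => //.
exists sg, (sg @: t0).
rewrite /imF /A0 -imset_comp; apply: eq_imset => x /=.
by rewrite /cube_aut /phi pim_symdiff.
Qed.
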